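(* Let $n>2$ and let $\mathcal{T}(X_0)$ be a discrete generation pedigree of order $n$ and depth $d\ge 1$. Suppose there are distinct $x_i,x_j\in X_0$ having the same two parents. Then for every discrete generation pedigree $\mathcal{U}(X_0)$ such that for each $Y\subset X_0$ with $|Y|=n-1$ there is an isomorphism $\mathcal{T}(Y)\to\mathcal{U}(Y)$ fixing every vertex of $Y$, there is an isomorphism $\mathcal{T}(X_0)\to\mathcal{U}(X_0)$ fixing every vertex of $X_0$.
   Context: A (general) pedigree $\mathcal{T}(X_0)$ on a set $X_0$ is a finite directed graph on a vertex set $V$ such that: every vertex has out-degree $0$ or $2$; $X_0\subseteq V$ and every vertex of $X_0$ has in-degree $0$; there are no isolated vertices. Vertices of $X_0$ are extant; $|X_0|$ is the order. If $uv$ is an arc, $v$ is a parent of $u$. A discrete generation pedigree of depth $d$ on $X_0$ has vertex set $V=\bigcup_{i=0}^d X_i$ with the $X_i$ disjoint, $X_d$ the set of vertices of out-degree $0$, and every vertex of $X_i$ ($i<d$) having its two out-arcs to vertices of $X_{i+1}$. For $Y\subseteq X_0$, the sub-pedigree $\mathcal{T}(Y)$ is obtained by deleting every vertex having no descendant in $Y$ (a descendant of $v$ is a vertex $u$ with a directed path from $u$ to $v$, including $u=v$). Isomorphisms are arc-preserving bijections in both directions. *)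

(* Defs.v *)
From mathcomp Require Import all_boot.
Set Implicit Arguments. Unset Strict Implicit. Unset Printing Implicit Defensive.

(* A pedigree on the label set X (the extant set X_0 is the image of an
   injective labelling e : X -> V), with vertex set a finite type V and arc
   relation a : rel V ("a u v" means v is a parent of u). *)

Definition outdeg (V : finType) (a : rel V) (u : V) : nat := #|[set v | a u v]|.
Definition indeg (V : finType) (a : rel V) (v : V) : nat := #|[set u | a u v]|.

Definition is_pedigree (X V : finType) (a : rel V) (e : X -> V) : Prop :=
  [/\ injective e,
      (forall u, outdeg a u = 0 \/ outdeg a u = 2),
      (forall x, indeg a (e x) = 0)
    & (forall v, 0 < outdeg a v + indeg a v)].

(* Discrete generation pedigree of depth d: g v is the index i with v in X_i. *)
Definition is_dgp (X V : finType) (a : rel V) (e : X -> V) (g : V -> nat) (d : nat)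
  : Prop :=
  [/\ is_pedigree a e,
      (forall v, g v <= d),
      (forall v, g v = 0 <-> exists x, e x = v),
      (forall v, g v = d <-> outdeg a v = 0)
    & (forall u v, g u < d -> a u v -> g v = (g u).+1)].

(* Vertex set of the sub-pedigree T(Y): vertices having a descendant in Y
   (u is a descendant of v iff there is a directed path from u to v). *)
Definition subV (X V : finType) (a : rel V) (e : X -> V) (Y : {set X}) : {set V} :=
  [set v | [exists y in Y, connect a (e y) v]].

Definition iso_fixing (X VT VU : finType) (aT : rel VT) (eT : X -> VT)
  (aU : rel VU) (eU : X -> VU) (Y : {set X}) : Prop :=
  exists f : VT -> VU,
    [/\ {in subV aT eT Y &, injective f},
        f @: subV aT eT Y = subV aU eU Y,
        {in subV aT eT Y &, forall u v, aT u v = aU (f u) (f v)}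
      & forall y, y \in Y -> f (eT y) = eU y].

(* Main.v *)
Require Import Defs.
From mathcomp Require Import all_boot zify.
Set Implicit Arguments. Unset Strict Implicit. Unset Printing Implicit Defensive.

Lemma indeg0 (V:finType) (a:rel V) v : indeg a v = 0 -> forall u, a u v = false.
Proof.
rewrite /indeg => /eqP; rewrite cards_eq0 => /eqP H u.
apply/negbTE/negP => Hu.
have: u \in [set u | a u v] by rewrite inE.
by rewrite H inE.
Qed.

Lemma conn0 (V:finType) (a:rel V) u v : indeg a v = 0 -> connect a u v -> u = v.
Proof.
move=> H /connectP [p Hp Ev]. case/lastP: p Hp Ev => [//|p z].
rewrite rcons_path last_rcons => /andP [_] Ha Ev; subst z.
by rewrite (indeg0 H) in Ha.
Qed.

Lemma conn_split (V:finType) (a:rel V) u v :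
  connect a u v -> u = v \/ exists2 w, a u w & connect a w v.
Proof.
move=> /connectP [[|w p] /= Hp ->]; [by left|right].
case/andP: Hp => Huw Hp. exists w => //. apply/connectP; by exists p.
Qed.

Lemma in_subV (X V : finType) (a : rel V) (e : X -> V) (Y : {set X}) y v :
  y \in Y -> connect a (e y) v -> v \in subV a e Y.
Proof. move=> H1 H2; rewrite /subV inE; apply/existsP; exists y; by rewrite H1 H2. Qed.

Lemma subV_split (X V : finType) (a : rel V) (e : X -> V) xi xj :
  xi != xj -> (forall w, a (e xi) w = a (e xj) w) ->
  subV a e setT = e xi |: subV a e [set~ xi].
Proof.
move=> Hne Heq; apply/setP => v; rewrite /subV !inE. apply/idP/idP.
- case/existsP => y /andP [_ Hc]. case: (eqVneq y xi) => [Ey|Hy].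
  + subst y. case: (conn_split Hc) => [->|[w Hw Hc']]; first by apply/orP; left.
    apply/orP; right; apply/existsP; exists xj; rewrite !inE eq_sym Hne /=.
    apply: connect_trans Hc'; apply: connect1; by rewrite -Heq.
  + apply/orP; right; apply/existsP; exists y; by rewrite !inE Hy.
- case/orP => [/eqP ->| /existsP [y /andP [_ Hc]]]; apply/existsP;
    [exists xi | exists y]; by rewrite ?inE ?connect0.
Qed.

Lemma notin_subV (X V : finType) (a : rel V) (e : X -> V) xi :
  injective e -> indeg a (e xi) = 0 -> e xi \notin subV a e [set~ xi].
Proof.
move=> inj H; apply/negP; rewrite /subV inE => /existsP [y /andP [Hy Hc]].
have := conn0 H Hc; move/inj => Eq; subst y; by rewrite !inE eqxx in Hy.
Qed.

Theorem mainTheorem4 (X : finType) (n d : nat) (VT : finType) (aT : rel VT)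
  (eT : X -> VT) (gT : VT -> nat) :
  2 < n -> #|X| = n -> 1 <= d -> is_dgp aT eT gT d ->
  (exists xi xj : X, xi != xj /\
     [set v | aT (eT xi) v] = [set v | aT (eT xj) v]) ->
  forall (VU : finType) (aU : rel VU) (eU : X -> VU) (gU : VU -> nat) (dU : nat),
    is_dgp aU eU gU dU ->
    (forall Y : {set X}, #|Y| = n.-1 -> iso_fixing aT eT aU eU Y) ->
    iso_fixing aT eT aU eU setT.
Proof.
move=> Hn HX _ [[injT _ indT _] _ _ _ _] [xi [xj [Hne PT]]] VU aU eU gU dU
  [[injU _ indU _] _ _ _ _] Hiso.
have HT w : aT (eT xi) w = aT (eT xj) w.
  have : w \in [set v | aT (eT xi) v] = (w \in [set v | aT (eT xj) v]) by rewrite PT.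
  by rewrite !inE.
have [xk Hk] : exists xk, xk \in ~: [set xi; xj].
  apply/set0Pn; rewrite -cards_eq0 -lt0n.
  have := cardsC [set xi; xj]; rewrite cards2 Hne HX => H. lia.
rewrite !inE negb_or in Hk; case/andP: Hk => Hki Hkj.
have [f3 [inj3 im3 pres3 fix3]] : iso_fixing aT eT aU eU [set~ xk] by apply: Hiso; rewrite cardsC1 HX.
have [f1 [inj1 im1 pres1 fix1]] : iso_fixing aT eT aU eU [set~ xi] by apply: Hiso; rewrite cardsC1 HX.
have HU w : aU (eU xi) w = aU (eU xj) w.
  case: (boolP (w \in subV aU eU [set~ xk])) => Hw.
  - move: Hw; rewrite -im3 => /imsetP [t Ht ->].
    have mi : eT xi \in subV aT eT [set~ xk].
      by apply: (in_subV (y:=xi)) => //; rewrite !inE eq_sym.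
    have mj : eT xj \in subV aT eT [set~ xk].
      by apply: (in_subV (y:=xj)) => //; rewrite !inE eq_sym.
    have E1 : eU xi = f3 (eT xi) by rewrite fix3 // !inE eq_sym.
    have E2 : eU xj = f3 (eT xj) by rewrite fix3 // !inE eq_sym.
    by rewrite E1 E2 -!pres3.
  - apply/idP/idP => H; exfalso; move/negP: Hw; apply.
    + apply: (in_subV (y:=xi)); first by rewrite !inE eq_sym.
      exact: connect1.
    + apply: (in_subV (y:=xj)); first by rewrite !inE eq_sym.
      exact: connect1.
have splT := subV_split (a:=aT) Hne HT.
have splU := subV_split (a:=aU) Hne HU.
have nT := notin_subV injT (indT xi).
have nU := notin_subV injU (indU xi).
have xjT : eT xj \in subV aT eT [set~ xi].
  by apply: (in_subV (y:=xj)) => //; rewrite !inE eq_sym.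
pose f v := if v == eT xi then eU xi else f1 v.
have f1in v : v \in subV aT eT [set~ xi] -> f1 v \in subV aU eU [set~ xi].
  by move=> Hv; rewrite -im1; apply: imset_f.
exists f; split.
- move=> u v; rewrite splT !in_setU1 /f.
  case: (eqVneq u (eT xi)) => [->|nu] /= Hu;
  case: (eqVneq v (eT xi)) => [->|nv] /= Hv //.
  + move=> E; have := f1in _ Hv; by rewrite -E (negbTE nU).
  + move=> E; have := f1in _ Hu; by rewrite E (negbTE nU).
  + exact: inj1.
- rewrite splT splU imsetU1 /f eqxx; congr (_ |: _).
  rewrite -im1; apply: eq_in_imset => v Hv.
  by case: eqP Hv nT => // -> ->.
- move=> u v; rewrite splT !in_setU1 /f.
  case: (eqVneq u (eT xi)) => [->|nu] /= Hu;
  case: (eqVneq v (eT xi)) => [->|nv] /= Hv.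
  + by rewrite (indeg0 (indT xi)) (indeg0 (indU xi)).
  + by rewrite HT HU -(fix1 xj) ?inE 1?eq_sym // pres1.
  + by rewrite (indeg0 (indT xi)) (indeg0 (indU xi)).
  + exact: pres1.
- move=> y _; rewrite /f (inj_eq injT).
  case: eqP => [->//|/eqP Hy]; by rewrite fix1 // !inE.
Qed.
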